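(* Let $M\ge0$. In the quotient $R_{M,n}/J_M$, the images of $\{e_\lambda:\lambda\in B^{(k,r)}_M\}$ span; i.e. for every $\lambda\in S^{(k,r)}_M$ the image of $e_\lambda$ is a $\mathbb C$-linear combination of images of $e_\mu$ with $\mu\in B^{(k,r)}_M$.
   Context: Fix integers $n\ge2$, $1\le k\le n-1$, $r\ge2$, $\tau=e^{2\pi\sqrt{-1}/(r-1)}$. Let $P=\mathbb Z^n$ and $P_M=\{\lambda\in P:-M\le\lambda_i\le M\ \forall i\}$. Let $R_{M,n}$ be the $\mathbb C$-vector space with basis $\{e_\lambda:\lambda\in P_M\}$ (identified with $W^{\otimes n}$, $W=\mathrm{span}_{\mathbb C}\{e_d:-M\le d\le M\}$, via $e_\lambda=e_{\lambda_1}\otimes\cdots\otimes e_{\lambda_n}$). Set $e(w)=\sum_{d=-M}^Me_dw^d$ for $w\in\mathbb C^\times$. Let $J_M\subset R_{M,n}$ be the span of all vectors $e(z_1)\otimes\cdots\otimes e(z_n)$ where $z\in(\mathbb C^\times)^n$ is such that for some $i_1<\dots<i_{k+1}$, some $w\in\mathbb C^\times$ and some $p_1,\dots,p_{k+1}\in\{0,\dots,r-2\}$ one has $z_{i_a}=\tau^{p_a}w$ for $1\le a\le k+1$. For $\lambda\in P$, $\rho(\lambda)$ is the unique permutation of $(\frac{n-1}2,\dots,-\frac{n-1}2)$ with $\rho(\lambda)_i>\rho(\lambda)_j$ iff $\lambda_i>\lambda_j$ or ($\lambda_i=\lambda_j$, $i<j$). For $a\ge2,b\ge1$, $(i,j)$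 is a neighborhood of type $(a,b)$ in $\lambda$ if $\rho(\lambda)_i-\rho(\lambda)_j=a-1$ and either $\lambda_i-\lambda_j\le b-1$, or $\lambda_i-\lambda_j=b$ and $j<i$. $S^{(k,r)}$: the $\lambda$ having a neighborhood of type $(k+1,r-1)$; $B^{(k,r)}=P\setminus S^{(k,r)}$; $S^{(k,r)}_M=S^{(k,r)}\cap P_M$, $B^{(k,r)}_M=B^{(k,r)}\cap P_M$. *)

(* Defs.v *)
From HB Require Import structures.
From mathcomp Require Import all_boot all_order all_algebra.
From mathcomp Require Import complex.
From mathcomp Require Import reals trigo.

Set Implicit Arguments.
Unset Strict Implicit.
Unset Printing Implicit Defensive.

Import Order.TTheory GRing.Theory Num.Theory.
Local Open Scope ring_scope.

Definition weight (n : nat) := {ffun 'I_n -> int}.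

Definition inPM (n M : nat) (l : weight n) : bool :=
  [forall i, (- (M%:Z) <= l i) && (l i <= M%:Z)].

(* rho(lambda)_i = (n-1)/2 - #{ j | l_j > l_i or (l_j = l_i and j < i) }:
   the unique permutation of ((n-1)/2, ..., -(n-1)/2) with
   rho_i > rho_j iff l_i > l_j or (l_i = l_j and i < j). *)
Definition rank_of (n : nat) (l : weight n) (i : 'I_n) : nat :=
  #|[set j : 'I_n | (l i < l j) || ((l j == l i) && (j < i)%N)]|.

Definition rho (n : nat) (l : weight n) (i : 'I_n) : rat :=
  ((n%:R - 1) / 2%:R) - (rank_of l i)%:R.

Definition neighborhood (n : nat) (a b : nat) (l : weight n) (i j : 'I_n) : Prop :=
  rho l i - rho l j = (a%:R - 1) /\
  ((l i - l j <= b%:Z - 1) \/ (l i - l j = b%:Z /\ (j < i)%N)).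

Definition inS (n k r : nat) (l : weight n) : Prop :=
  exists i j : 'I_n, neighborhood (k.+1) (r.-1) l i j.

Definition inB (n k r : nat) (l : weight n) : Prop := ~ inS k r l.

Section Vectors.
Variable R : realType.
Local Notation C := R[i].
Local Open Scope complex_scope.

Definition tau (r : nat) : C :=
  (cos (2 * pi / (r.-1)%:R) +i* sin (2 * pi / (r.-1)%:R))%C.

(* Elements of R_{M,n} are represented as functions on weights supported on P_M;
   e_lambda is the indicator of lambda. *)
Definition basis_vec (n : nat) (l : weight n) : weight n -> C :=
  fun mu => (mu == l)%:R.

(* e(z_1) (x) ... (x) e(z_n), with e(w) = sum_{d=-M}^{M} e_d w^d *)
Definition ev (n M : nat) (z : 'I_n -> C) : weight n -> C :=
  fun mu => if inPM M mu then \prod_(i < n) (z i) ^ (mu i) else 0.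

(* z generates J_M: z in (C^x)^n and some i_1<...<i_{k+1}, w in C^x,
   p_1..p_{k+1} in {0..r-2} with z_{i_a} = tau^{p_a} w. *)
Definition Jpoint (n k r : nat) (z : 'I_n -> C) : Prop :=
  (forall i, z i != 0) /\
  exists (idx : 'I_k.+1 -> 'I_n) (w : C) (p : 'I_k.+1 -> nat),
    (forall a b : 'I_k.+1, (a < b)%N -> (idx a < idx b)%N) /\
    w != 0 /\
    (forall a, (p a <= r - 2)%N) /\
    (forall a, z (idx a) = tau r ^+ (p a) * w).

End Vectors.

(* Main.v *)
Require Import Defs.
From HB Require Import structures.
From mathcomp Require Import all_boot all_order all_algebra.
From mathcomp Require Import complex.
From mathcomp Require Import reals trigo.
From mathcomp Require Import ring lra zify.
From Stdlib Require Import Classical.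

Import Order.TTheory GRing.Theory Num.Theory.
Local Open Scope ring_scope.

Local Open Scope complex_scope.

Lemma demoivre (R : realType) (t : R) (m : nat) :
  ((cos t +i* sin t)^+m = cos (t * m%:R) +i* sin (t * m%:R))%C.
Proof.
elim: m => [|m IH]; first by rewrite expr0 mulr0 cos0 sin0.
rewrite exprSr IH /= -natr1 mulrDr mulr1 cosD sinD.
rewrite [X in X = _]/GRing.mul /=. by congr (_ +i* _); rewrite addrC.
Qed.

Definition rt (R : realType) (d : nat) : R[i] :=
  (cos (2 * pi / d%:R) +i* sin (2 * pi / d%:R))%C.

Lemma rt_d (R : realType) d : (0 < d)%N -> rt R d ^+ d = 1.
Proof.
move=> hd; rewrite /rt demoivre mulfVK; last by rewrite pnatr_eq0 -lt0n.
by rewrite mulr_natl cos2pi sin2pi.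
Qed.

Lemma rt_neq1 (R : realType) d m : (0 < m < d)%N -> rt R d ^+ m != 1.
Proof.
case/andP=> hm hmd; rewrite /rt demoivre.
set x := 2 * pi / d%:R * m%:R.
have hd : (0 < d%:R :> R) by rewrite ltr0n; lia.
have x0 : 0 < x by rewrite /x !mulr_gt0 ?ltr0n ?invr_gt0 ?pi_gt0.
have x2 : x < pi *+ 2.
  rewrite /x mulrAC ltr_pdivrMr // -mulr_natr.
  have hmd' : (m%:R < d%:R :> R) by rewrite ltr_nat.
  have hpi : 0 < pi :> R := pi_gt0 R.
  nra.
apply/negP => /eqP [hc hs].
have [xpi|pix] := lerP x pi.
  have : cos x = cos 0 by rewrite hc cos0.
  move/cos_inj; rewrite !in_itv /= (ltW x0) xpi lexx pi_ge0 => /(_ isT isT) x00.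
  by move: x0; rewrite x00 ltxx.
have : 0 < sin (x - pi) by apply: sin_gt0_pi; rewrite subr_gt0 pix /=; lra.
have := sinDpi (x - pi); rewrite subrK hs => h0; lra.
Qed.

Lemma rt_neq0 (R : realType) d : (0 < d)%N -> rt R d != 0.
Proof.
move=> hd; apply/negP => /eqP h0; have := @rt_d R d hd.
by rewrite h0 expr0n gtn_eqF //= => /eqP; rewrite eq_sym oner_eq0.
Qed.

Lemma rt_exprz_eq1 (R : realType) d (e : int) : (0 < d)%N ->
  ((rt R d) ^ e == 1) = (d%:Z %| e)%Z.
Proof.
move=> hd; have ud : rt R d \is a GRing.unit by rewrite unitfE rt_neq0.
have dz : d%:Z != 0 by rewrite eqz_nat -lt0n.
rewrite {1}(divz_eq e d%:Z) exprzDr // [(_ %/ _)%Z * _]mulrC -exprz_exp.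
have -> : rt R d ^ d%:Z = 1 by exact: (@rt_d R d hd).
rewrite exp1rz mul1r.
have := modz_ge0 e dz; have := ltz_pmod e (d := d%:Z).
case: (e %% d%:Z)%Z (@dvdz_mod0P d%:Z e) => [rho|rho] hP; last by [].
move=> hlt _.
have hlt' : (rho < d)%N by move: (hlt (ltac:(rewrite ltz_nat; exact hd))); rewrite ltz_nat.
case: rho hP hlt hlt' => [|rho] hP _ hlt'.
  by rewrite expr0z eqxx; apply/esym/hP.
rewrite (negPf (@rt_neq1 R d rho.+1 _)) ?hlt' //.
apply/esym/negP => /hP; done.
Qed.

Lemma rt_charsum (R : realType) d L (e : int) : (0 < d)%N -> (d %| L)%N ->
  \sum_(y < L) ((rt R d) ^+ y) ^ e = if (d%:Z %| e)%Z then L%:R else 0.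
Proof.
move=> hd hdL.
have E : forall y : nat, ((rt R d) ^+ y) ^ e = ((rt R d) ^ e) ^+ y.
  by move=> y; exact: (exprzAC (rt R d) y e).
under eq_bigr do rewrite E.
case: ifP => hde.
  move: hde; rewrite -(@rt_exprz_eq1 R) // => /eqP ->.
  by under eq_bigr do rewrite expr1n; rewrite sumr_const card_ord.
set eta := rt R d ^ e.
have etad : eta ^+ d = 1.
  rewrite /eta; have -> : (rt R d ^ e) ^+ d = (rt R d ^ e) ^ d%:Z by [].
  rewrite exprzAC; have -> : rt R d ^ d%:Z = 1 by exact: (@rt_d R d hd).
  by rewrite exp1rz.
have etaL : eta ^+ L = 1.
  by case/dvdnP: hdL => c ->; rewrite mulnC exprM etad expr1n.
have : (eta - 1) * (\sum_(i < L) eta ^+ i) = 0 by rewrite -subrX1 etaL subrr.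
move/eqP; rewrite mulf_eq0 subr_eq0 (@rt_exprz_eq1 R) // hde /= => /eqP //.
Qed.

Lemma pick_idx n k (A : {set 'I_n}) (i0 : 'I_n) : (k.+1 <= #|A|)%N ->
  exists idx : 'I_k.+1 -> 'I_n,
    (forall a b : 'I_k.+1, (a < b)%N -> (idx a < idx b)%N) /\ (forall a, idx a \in A).
Proof.
move=> hA.
have inc_A : sorted ltn (map val (enum A)).
  rewrite -[enum _](eq_filter (mem_enum _)).
  rewrite -(eq_filter (mem_map val_inj _)) -filter_map.
  by rewrite (sorted_filter ltn_trans) // unlock val_ord_enum iota_ltn_sorted.
exists (fun a => nth i0 (enum A) a); split.
  move=> a b hab; rewrite -!(nth_map i0 (val i0)) ?cardE -?cardE;
    try by apply: leq_trans hA; rewrite ltnS -ltnS ?ltn_ord.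
  apply: (sorted_ltn_nth ltn_trans) => //; rewrite inE size_map -cardE;
    by apply: leq_trans hA; rewrite ltnS -ltnS ?ltn_ord.
move=> a; rewrite -mem_enum; apply: mem_nth; rewrite -cardE.
by apply: leq_trans hA; rewrite ltnS -ltnS ?ltn_ord.
Qed.

Local Close Scope complex_scope.

Lemma T1 (li lj lm rr t : int) : 1 <= rr -> lj <= lm <= li -> li - lj <= rr ->
  0 <= (rr * t) ^+ 2 + (rr * t) * (2 * lm - li - lj).
Proof.
move=> h1 h2 h3.
have [t0|t0] := lerP 1 t.
  have : 0 <= rr * t + (2 * lm - li - lj) by nia.
  have : 0 <= rr * t by nia.
  nia.
have [t1|t1] := lerP t (-1).
  have : rr * t + (2 * lm - li - lj) <= 0 by nia.
  have : rr * t <= 0 by nia.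
  nia.
have -> : t = 0 by lia.
by rewrite mulr0 expr0n /= mul0r addr0.
Qed.

Lemma T2 (li lj lm rr t : int) : 1 <= rr -> lj <= lm <= li -> li - lj <= rr - 1 -> t != 0 ->
  0 < (rr * t) ^+ 2 + (rr * t) * (2 * lm - li - lj).
Proof.
move=> h1 h2 h3 h4.
have [t0|t0] := lerP 1 t.
  have : 1 <= rr * t + (2 * lm - li - lj) by nia.
  have : 1 <= rr * t by nia.
  nia.
have [t1|t1] := lerP t (-1).
  have : rr * t + (2 * lm - li - lj) <= -1 by nia.
  have : rr * t <= -1 by nia.
  nia.
lia.
Qed.

Lemma T3 (li lj lm rr t : int) : 1 <= rr -> lj <= lm <= li -> li - lj = rr -> t != 0 ->
  (rr * t) ^+ 2 + (rr * t) * (2 * lm - li - lj) = 0 ->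
  (t = 1 /\ lm = lj) \/ (t = -1 /\ lm = li).
Proof.
move=> h1 h2 h3 h4 h5.
have [t0|t0] := lerP 2 t.
  have : 0 < (rr * t) ^+ 2 + (rr * t) * (2 * lm - li - lj); last by rewrite h5 ltxx.
  have : rr <= rr * t + (2 * lm - li - lj) by nia.
  have : 1 <= rr * t by nia.
  nia.
have [t1|t1] := lerP t (-2).
  have : 0 < (rr * t) ^+ 2 + (rr * t) * (2 * lm - li - lj); last by rewrite h5 ltxx.
  have : rr * t + (2 * lm - li - lj) <= - rr by nia.
  have : rr * t <= -1 by nia.
  nia.
have ht : t = 1 \/ t = -1 by lia.
case: ht => ht; subst t.
  left; split => //; move: h5; rewrite mulr1 => h5.
  have : rr * (rr + (2 * lm - li - lj)) = 0 by rewrite -h5; ring.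
  move/eqP; rewrite mulf_eq0 => /orP [/eqP|/eqP]; lia.
right; split => //; move: h5; rewrite mulrN1 => h5.
have : rr * (rr - (2 * lm - li - lj)) = 0 by rewrite -h5; ring.
move/eqP; rewrite mulf_eq0 => /orP [/eqP|/eqP]; lia.
Qed.

Inductive spanP (R : realType) (n k r M : nat) : (weight n -> R[i]) -> Prop :=
| sp0 : spanP R n k r M (fun _ => 0)
| spB c mu f : inPM M mu -> inB k r mu -> spanP R n k r M f ->
    spanP R n k r M (fun nu => c * @basis_vec R n mu nu + f nu)
| spJ a z f : Jpoint k r z -> spanP R n k r M f ->
    spanP R n k r M (fun nu => a * ev M z nu + f nu)
| spExt f g : spanP R n k r M f -> (forall nu, f nu = g nu) -> spanP R n k r M g.
Arguments sp0 {R n k r M}.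
Arguments spB {R n k r M} c mu f.
Arguments spJ {R n k r M} a z f.
Arguments spExt {R n k r M} f g.
Set Implicit Arguments.
Unset Strict Implicit.
Unset Printing Implicit Defensive.

Lemma spAdd (R : realType) (n k r M : nat) f g : spanP R n k r M f -> spanP R n k r M g ->
  spanP R n k r M (fun nu => f nu + g nu).
Proof.
move=> hf hg; elim: hf => {f}.
- by apply: spExt _ _ hg _ => nu; rewrite add0r.
- move=> c mu f h1 h2 _ IH; apply: spExt _ _ (spB c _ _ h1 h2 IH) _ => nu; by rewrite addrA.
- move=> a z f h1 _ IH; apply: spExt _ _ (spJ a _ _ h1 IH) _ => nu; by rewrite addrA.
- move=> f f' _ IH e; apply: spExt _ _ IH _ => nu; by rewrite e.
Qed.

Lemma spScale (R : realType) (n k r M : nat) f (c : R[i]) : spanP R n k r M f ->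
  spanP R n k r M (fun nu => c * f nu).
Proof.
elim => {f}.
- by apply: spExt _ _ sp0 _ => nu; rewrite mulr0.
- move=> c' mu f h1 h2 _ IH; apply: spExt _ _ (spB (c * c') _ _ h1 h2 IH) _ => nu; by rewrite mulrDr mulrA.
- move=> a z f h1 _ IH; apply: spExt _ _ (spJ (c * a) _ _ h1 IH) _ => nu; by rewrite mulrDr mulrA.
- move=> f f' _ IH e; apply: spExt _ _ IH _ => nu; by rewrite e.
Qed.

Lemma spSum (R : realType) (n k r M : nat) (I : finType) (P : pred I) (F : I -> weight n -> R[i]) :
  (forall i, P i -> spanP R n k r M (F i)) ->
  spanP R n k r M (fun nu => \sum_(i | P i) F i nu).
Proof.
move=> h.
suff H : forall s, spanP R n k r M (fun nu => \sum_(i <- s | P i) F i nu) by exact: H.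
elim => [|x s IH].
  by apply: spExt _ _ sp0 _ => nu; rewrite big_nil.
have H : spanP R n k r M (fun nu => (if P x then F x nu else 0) + \sum_(i <- s | P i) F i nu).
  apply: spAdd IH; case hx: (P x); first exact: h.
  exact: sp0.
apply: spExt _ _ H _.
by move=> nu; rewrite big_cons; case: ifP => _ //; rewrite add0r.
Qed.

Lemma spExtract (R : realType) (n k r M : nat) f : spanP R n k r M f ->
  exists (m1 : nat) (mu : 'I_m1 -> weight n) (c : 'I_m1 -> R[i])
         (m2 : nat) (z : 'I_m2 -> 'I_n -> R[i]) (a : 'I_m2 -> R[i]),
    (forall t, inPM M (mu t) /\ inB k r (mu t)) /\
    (forall t, Jpoint k r (z t)) /\
    (forall nu : weight n,
       f nu =
       \sum_(t < m1) c t * @basis_vec R n (mu t) nu + \sum_(t < m2) a t * ev M (z t) nu).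
Proof.
elim => {f}.
- exists 0%N, (fun _ => [ffun _ => 0] : weight n), (fun _ => 0), 0%N,
    (fun _ _ => 0), (fun _ => 0).
  split; first by case.
  split; first by case.
  by move=> nu; rewrite !big_ord0 addr0.
- move=> c mu f h1 h2 _ [m1 [mus [cs [m2 [z [a [H1 [H2 H3]]]]]]]].
  exists m1.+1, (fun t => if unlift ord0 t is Some t' then mus t' else mu),
    (fun t => if unlift ord0 t is Some t' then cs t' else c), m2, z, a.
  split; first by move=> t; case: (unlift ord0 t) => [t'|] //; exact: H1.
  split => // nu; rewrite big_ord_recl unlift_none H3 addrA; congr (_ + _ + _).
  by apply: eq_bigr => t _; rewrite liftK.
- move=> a0 z0 f h1 _ [m1 [mus [cs [m2 [z [a [H1 [H2 H3]]]]]]]].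
  exists m1, mus, cs, m2.+1, (fun t => if unlift ord0 t is Some t' then z t' else z0),
    (fun t => if unlift ord0 t is Some t' then a t' else a0).
  split => //; split; first by move=> t; case: (unlift ord0 t) => [t'|] //; exact: H2.
  move=> nu; rewrite big_ord_recl unlift_none H3 addrCA; congr (_ + (_ + _)).
  by apply: eq_bigr => t _; rewrite liftK.
- move=> f g _ [m1 [mus [cs [m2 [z [a [H1 [H2 H3]]]]]]]] e.
  by exists m1, mus, cs, m2, z, a; split => //; split => // nu; rewrite -e.
Qed.

Lemma prodz (F : fieldType) (I : finType) (P : pred I) (y : F) (e : I -> int) :
  y != 0 -> \prod_(i | P i) y ^ e i = y ^ (\sum_(i | P i) e i).
Proof.
move=> y0; have uy : y \is a GRing.unit by rewrite unitfE.
apply: (big_rec2 (fun a b => b = y ^ a)) => [|i a b _ ->]; first by rewrite expr0z.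
by rewrite exprzDr.
Qed.

Lemma prod_if (F : fieldType) (I : finType) (P : pred I) (c : F) :
  \prod_i (if P i then c else 0) = if [forall i, P i] then c ^+ #|I| else 0.
Proof.
case: ifP => [/forallP h|/negbT]; first by rewrite -prodr_const; apply: eq_bigr => i _; rewrite h.
rewrite negb_forall => /existsP [i0 hi0].
by rewrite (bigD1 i0) //= (negPf hi0) mul0r.
Qed.

Lemma small_dvd (N : nat) (e : int) : - N%:Z < e < N%:Z -> (N%:Z %| e)%Z = (e == 0).
Proof.
move=> he; apply/idP/idP => [hd|/eqP ->]; last exact: dvdz0.
apply/negPn/negP => e0.
have : (N <= `|e|)%N by apply: dvdn_leq; [rewrite absz_gt0 | exact: hd].
lia.
Qed.

Lemma sum_bound (n : nat) (A : {set 'I_n}) (f : 'I_n -> int) (B : nat) :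
  (forall a, a \in A -> - B%:Z <= f a <= B%:Z) ->
  - (B * n)%N%:Z <= \sum_(a in A) f a <= (B * n)%N%:Z.
Proof.
move=> h; have E : (B * #|A|)%N%:Z = \sum_(a in A) B%:Z by rewrite sumr_const; lia.
have cA : (#|A| <= n)%N by rewrite -[n in (_ <= n)%N]card_ord max_card.
have cB : (B * #|A| <= B * n)%N by rewrite leq_mul2l cA orbT.
have : - (B * #|A|)%N%:Z <= \sum_(a in A) f a <= (B * #|A|)%N%:Z.
  rewrite E -sumrN; apply/andP; split; apply: ler_sum => a /h /andP [] //.
move: cB; set X := (B * #|A|)%N; set Y := (B * n)%N; lia.
Qed.

Definition Tcond (n r M : nat) (lam : weight n) (A : {set 'I_n}) (nu : weight n) : bool :=
  ((inPM M nu && [forall m, (m \notin A) ==> (nu m == lam m)])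
     && [forall a, (a \in A) ==> ((r.-1)%:Z %| nu a - lam a)%Z])
     && (\sum_(a in A) nu a == \sum_(a in A) lam a).

Lemma Jrel (R : realType) (n k r M : nat) (lam : weight n) (A : {set 'I_n}) (i0 : 'I_n) :
  (2 <= r)%N -> (k.+1 <= #|A|)%N -> inPM M lam ->
  spanP R n k r M (fun nu => (Tcond r M lam A nu)%:R).
Proof.
move=> hr hA hlam.
have n0 : (0 < n)%N by case: i0 => i /=; lia.
set N := (2 * n * M).+1.
pose d i := if i \in A then r.-1 else N.
set L := (r.-1 * N)%N.
have d0 i : (0 < d i)%N by rewrite /d; case: ifP => _; lia.
have dL i : (d i %| L)%N by rewrite /d; case: ifP => _; [exact: dvdn_mulr | exact: dvdn_mull].
pose g (i : 'I_n) (y : nat) : R[i] := rt R (d i) ^+ y.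
pose w (s : nat) : R[i] := rt R N ^+ s.
pose zz (s : 'I_N) (x : {ffun 'I_n -> 'I_L}) : 'I_n -> R[i] :=
  fun i => g i (x i) * (if i \in A then w s else 1).
pose cc (s : 'I_N) (x : {ffun 'I_n -> 'I_L}) :=
  w s ^ (- \sum_(a in A) lam a) * \prod_i (g i (x i)) ^ (- lam i).
have gn0 i y : g i y != 0 by rewrite expf_neq0 // rt_neq0.
have wn0 s : w s != 0 by rewrite expf_neq0 // rt_neq0.
have HJ s x : Jpoint k r (zz s x).
  split.
    by move=> i; rewrite /zz mulf_neq0 //; case: ifP => _ //; rewrite oner_neq0.
  have [idx [hinc hin]] := @pick_idx n k A i0 hA.
  exists idx, (w s), (fun a => (x (idx a) %% r.-1)%N).
  split => //; split => //; split.
    by move=> a; have := @ltn_pmod (x (idx a)) r.-1 ltac:(lia); lia.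
  move=> a; rewrite /zz /g /d hin.
  rewrite {1}(divn_eq (x (idx a)) r.-1) exprD mulnC exprM.
  by rewrite (@rt_d R r.-1 ltac:(lia)) expr1n mul1r.
have Hsp : spanP R n k r M (fun nu =>
    \sum_(s < N) \sum_(x : {ffun 'I_n -> 'I_L}) cc s x * ev M (zz s x) nu).
  apply: spSum => s _; apply: spSum => x _.
  apply: spExt _ _ (spJ (cc s x) (zz s x) _ (HJ s x) sp0) _ => nu; by rewrite addr0.
set K : R[i] := N%:R * L%:R ^+ n.
have K0 : K != 0.
  have L0 : (0 < L)%N by rewrite /L muln_gt0; apply/andP; split; lia.
  by rewrite /K mulf_neq0 ?expf_neq0 // pnatr_eq0 -lt0n.
suff key : forall nu, \sum_(s < N) \sum_(x : {ffun 'I_n -> 'I_L}) cc s x * ev M (zz s x) nu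
    = K * (Tcond r M lam A nu)%:R.
  apply: spExt _ _ (spScale K^-1 Hsp) _ => nu.
  by rewrite key mulrA mulVf ?mul1r.
move=> nu; rewrite /ev /Tcond.
case hnu: (inPM M nu); last first.
  rewrite /= mulr0; apply: big1 => s _; apply: big1 => x _; by rewrite mulr0.
have Ea s x : cc s x * \prod_i zz s x i ^ nu i =
    w s ^ (\sum_(a in A) nu a - \sum_(a in A) lam a) * \prod_i g i (x i) ^ (nu i - lam i).
  have -> : \prod_i zz s x i ^ nu i = \prod_i g i (x i) ^ nu i * \prod_(i in A) w s ^ nu i.
    rewrite [\prod_(i in A) _]big_mkcond /= -big_split /=; apply: eq_bigr => i _.
    rewrite /zz; case: ifP => hi; first by rewrite exprzMl ?unitfE.
    by rewrite !mulr1.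
  rewrite prodz // /cc.
  have -> : \prod_i g i (x i) ^ (nu i - lam i) =
      \prod_i g i (x i) ^ nu i * \prod_i g i (x i) ^ (- lam i).
    by rewrite -big_split; apply: eq_bigr => i _; rewrite exprzDr ?unitfE.
  rewrite addrC exprzDr ?unitfE //.
  ring.
rewrite /=.
under eq_bigr => s _ do under eq_bigr => x _ do rewrite Ea.
under eq_bigr => s _ do rewrite -mulr_sumr.
rewrite -mulr_suml.
rewrite -(bigA_distr_bigA (fun i (y : 'I_L) => g i y ^ (nu i - lam i))) /=.
rewrite [\prod_i _](eq_bigr (fun i => if ((d i)%:Z %| nu i - lam i)%Z then L%:R else 0));
  last by move=> i _; exact: (@rt_charsum R (d i) L (nu i - lam i) (d0 i) (dL i)).
rewrite (@rt_charsum R N N _ ltac:(lia) (dvdnn N)) prod_if card_ord.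
have bnu i : - M%:Z <= nu i <= M%:Z by move/forallP: hnu => /(_ i).
have blam i : - M%:Z <= lam i <= M%:Z by move/forallP: hlam => /(_ i).
have hNM : (2 * M < N)%N by have := leq_pmull M n0; rewrite /N; lia.
have hE : (N%:Z %| \sum_(a in A) nu a - \sum_(a in A) lam a)%Z =
    (\sum_(a in A) nu a == \sum_(a in A) lam a).
  rewrite -subr_eq0 small_dvd // -sumrB.
  have hb : forall a, a \in A -> - (2 * M)%N%:Z <= nu a - lam a <= (2 * M)%N%:Z.
    by move=> a _; have := bnu a; have := blam a; lia.
  have sb := sum_bound hb; rewrite /= in sb.
  have : (2 * M * n < N)%N by rewrite /N; lia.
  move: sb; clear; rewrite /N; set S := (\sum_(a in A) _); lia.
have hF : [forall i, ((d i)%:Z %| nu i - lam i)%Z] =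
    [forall m, (m \notin A) ==> (nu m == lam m)] &&
    [forall a, (a \in A) ==> ((r.-1)%:Z %| nu a - lam a)%Z].
  apply/forallP/andP => [h|[/forallP h1 /forallP h2] i]; last first.
    rewrite /d; case: ifP => hi; first by have := h2 i; rewrite hi.
    have := h1 i; rewrite hi /= => /eqP ->; rewrite subrr dvdz0 //.
  split; apply/forallP => i; apply/implyP => hi; have := h i; rewrite /d.
    rewrite (negPf hi) small_dvd ?subr_eq0 //; have := bnu i; have := blam i; lia.
  by rewrite hi.
rewrite hE hF /K.
case: (\sum_(a in A) nu a == \sum_(a in A) lam a);
  case: [forall m, (m \notin A) ==> (nu m == lam m)];
  case: [forall a, (a \in A) ==> ((r.-1)%:Z %| nu a - lam a)%Z] => /=;
  by rewrite ?mulr0 ?mul0r ?mulr1.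
Qed.

Definition m1 n M (mu : weight n) : int := \sum_m ((M%:Z) ^+ 2 - (mu m) ^+ 2).
Definition m2 n M (mu : weight n) : int := \sum_(m : 'I_n) ((m : nat)%:Z * (mu m + M%:Z)).

Lemma sum_pos_one (n : nat) (f : 'I_n -> int) (m0 : 'I_n) :
  (forall m, 0 <= f m) -> 0 < f m0 -> 0 < \sum_m f m.
Proof.
move=> h0 h1; rewrite (bigD1 m0) //=; apply: (lt_le_trans h1).
by rewrite lerDl; apply: sumr_ge0 => m _.
Qed.

Lemma decrease n r M (lam mu : weight n) (A : {set 'I_n}) (i j : 'I_n) :
  (2 <= r)%N ->
  (forall a, a \in A -> lam j <= lam a <= lam i) ->
  (forall a, a \in A -> lam a = lam i -> (i <= a)%N) ->
  (forall a, a \in A -> lam a = lam j -> (a <= j)%N) ->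
  (lam i - lam j <= (r.-1)%:Z - 1 \/ (lam i - lam j = (r.-1)%:Z /\ (j < i)%N)) ->
  Tcond r M lam A mu -> mu != lam ->
  m1 M mu < m1 M lam \/ (m1 M mu = m1 M lam /\ m2 M mu < m2 M lam).
Proof.
move=> hr HA1 HA2 HA3 Hnb.
rewrite /Tcond => /andP [/andP [/andP [hbox /forallP hout] /forallP hdiv] /eqP hsum] hne.
set rr : int := (r.-1)%:Z.
have rr1 : 1 <= rr by rewrite /rr; lia.
pose dl m := mu m - lam m.
have hdout m : m \notin A -> dl m = 0.
  by move=> hm; rewrite /dl; have := hout m; rewrite hm /= => /eqP ->; rewrite subrr.
have hdin m : m \in A -> exists t, dl m = rr * t.
  move=> hm; have := hdiv m; rewrite hm /= => /dvdzP [q hq]; exists q.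
  by rewrite /dl hq mulrC.
have hsumd : \sum_m dl m = 0.
  rewrite (bigID (fun m => m \in A)) /= [X in _ + X]big1 ?addr0; last first.
    by move=> m /hdout.
  by rewrite /dl sumrB hsum subrr.
have Dle : lam i - lam j <= rr by case: Hnb => [|[->]]; lia.
pose f m := dl m ^+ 2 + dl m * (2 * lam m - lam i - lam j).
have hf0 m : 0 <= f m.
  case: (boolP (m \in A)) => hm; last by rewrite /f hdout // expr0n /= mul0r addr0.
  have [t ht] := hdin m hm; rewrite /f ht; exact: T1 rr1 (HA1 m hm) Dle.
have Em1 : m1 M lam - m1 M mu = \sum_m f m.
  rewrite /m1 -sumrB.
  have -> : \sum_m f m = \sum_m f m + (lam i + lam j) * \sum_m dl m
    by rewrite hsumd mulr0 addr0.
  rewrite mulr_sumr -big_split /=; apply: eq_bigr => m _; rewrite /f /dl; ring.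
have Em2 : m2 M mu - m2 M lam = \sum_(m : 'I_n) (((m : nat)%:Z - (j : nat)%:Z) * dl m).
  have -> : \sum_(m : 'I_n) (((m : nat)%:Z - (j : nat)%:Z) * dl m) =
     \sum_(m : 'I_n) (((m : nat)%:Z - (j : nat)%:Z) * dl m) + (j : nat)%:Z * \sum_m dl m
    by rewrite hsumd mulr0 addr0.
  rewrite /m2 -sumrB mulr_sumr -big_split /=; apply: eq_bigr => m _; rewrite /dl; ring.
have [m0 hm0] : exists m, dl m != 0.
  have : ~~ [forall m, mu m == lam m].
    by apply: contra hne => /forallP h; apply/eqP/ffunP => m; exact/eqP/h.
  rewrite negb_forall => /existsP [m hm]; exists m; by rewrite /dl subr_eq0.
have m0A : m0 \in A by apply: contraR hm0 => /hdout ->.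
case: Hnb => [Hlt|[Heq hji]].
  left; have [t ht] := hdin m0 m0A.
  have : 0 < f m0.
    rewrite /f ht; apply: T2 rr1 (HA1 m0 m0A) Hlt _.
    by apply: contra hm0; rewrite ht => /eqP ->; rewrite mulr0.
  move/(sum_pos_one hf0); rewrite -Em1; lia.
have [pos|] := ltrP 0 (\sum_m f m); first by left; move: pos; rewrite -Em1; lia.
move=> sle; have s0 : \sum_m f m = 0 by apply/eqP; rewrite eq_le sle sumr_ge0.
have fz m : f m = 0 by move/eqP: s0; rewrite psumr_eq0 // => /allP /(_ m (mem_index_enum m)) /eqP.
right; split; first by move: s0; rewrite -Em1; lia.
pose g (m : 'I_n) := ((m : nat)%:Z - (j : nat)%:Z) * dl m.
have hg m : (dl m < 0 -> g m < 0) /\ g m <= 0.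
  case: (boolP (m \in A)) => hm; last by rewrite /g hdout // mulr0 ltxx lexx.
  have [t ht] := hdin m hm.
  have [t0|t0] := eqVneq t 0.
    by rewrite /g ht t0 mulr0 mulr0 ltxx lexx.
  have := @T3 (lam i) (lam j) (lam m) rr t rr1 (HA1 m hm) Heq t0; rewrite -ht; move/(_ (fz m)).
  case=> [[t1 hlm]|[t1 hlm]].
    have := HA3 m hm hlm; rewrite /g ht t1 mulr1 => hmj.
    have : ((m : nat)%:Z - (j : nat)%:Z) <= 0 by lia.
    split; [lia | nia].
  have := HA2 m hm hlm; rewrite /g ht t1 => him.
  have : 1 <= ((m : nat)%:Z - (j : nat)%:Z) by lia.
  split; nia.
have [mneg hneg] : exists m, dl m < 0.
  case: (boolP [exists m, dl m < 0]) => [/existsP [m h]|]; first by exists m.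
  rewrite negb_exists => /forallP hall.
  have hge m : 0 <= dl m by have := hall m; rewrite -leNgt.
  have : \sum_m dl m == 0 by rewrite hsumd.
  rewrite psumr_eq0 // => /allP /(_ m0 (mem_index_enum m0)) /implyP /(_ isT).
  by rewrite (negPf hm0).
have : \sum_m g m < 0.
  rewrite (bigD1 mneg) //= -(addr0 0); apply: ltr_leD; first exact: (hg mneg).1 hneg.
  by apply: sumr_le0 => m _; exact: (hg m).2.
rewrite /g -Em2; lia.
Qed.

Definition prec n (l : weight n) (a b : 'I_n) : bool :=
  (l b < l a) || ((l a == l b) && (a < b)%N).

Lemma prec_irr n (l : weight n) a : ~~ prec l a a.
Proof. by rewrite /prec ltxx ltnn andbF. Qed.

Lemma prec_trans n (l : weight n) a b c : prec l a b -> prec l b c -> prec l a c.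
Proof.
rewrite /prec => /orP [h1|/andP [/eqP e1 h1]] /orP [h2|/andP [/eqP e2 h2]]; apply/orP.
- by left; lia.
- by left; lia.
- by left; lia.
- by right; apply/andP; split; [apply/eqP; lia | lia].
Qed.

Lemma prec_total n (l : weight n) a b : a != b -> prec l a b || prec l b a.
Proof.
move=> hab; rewrite /prec; case: (ltgtP (l a) (l b)) => h //=.
case: (ltngtP a b) => // e.
by move: hab; rewrite (val_inj e) eqxx.
Qed.

Lemma rank_set n (l : weight n) i : rank_of l i = #|[set c | prec l c i]|.
Proof. by rewrite /rank_of; apply: eq_card => c; rewrite !inE /prec. Qed.

Lemma prec_rank n (l : weight n) a b : prec l a b -> (rank_of l a < rank_of l b)%N.
Proof.
move=> hab; rewrite !rank_set; apply: proper_card; apply/properP; split.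
  by apply/subsetP => c; rewrite !inE => h; exact: prec_trans h hab.
by exists a; rewrite !inE // prec_irr.
Qed.

Lemma inS_A n k r (l : weight n) : (1 <= k)%N -> inS k r l ->
  exists (i j : 'I_n) (A : {set 'I_n}),
  [/\ (k.+1 <= #|A|)%N,
      (forall a, a \in A -> l j <= l a <= l i),
      (forall a, a \in A -> l a = l i -> (i <= a)%N),
      (forall a, a \in A -> l a = l j -> (a <= j)%N) &
      (l i - l j <= (r.-1)%:Z - 1 \/ (l i - l j = (r.-1)%:Z /\ (j < i)%N))].
Proof.
move=> hk [i [j [hrho hnb]]].
have hrk : rank_of l j = (rank_of l i + k)%N.
  move: hrho; rewrite /rho -natr1 => h.
  apply/eqP; rewrite -(eqr_nat rat) natrD; apply/eqP; lra.
have pij : prec l i j.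
  have /orP [//|pji] : prec l i j || prec l j i.
    apply: prec_total; apply/negP => /eqP e; move: hrk; rewrite e; lia.
  by have := prec_rank pji; rewrite hrk; lia.
pose A := [set c | ((c == i) || prec l i c) && ((c == j) || prec l c j)].
exists i, j, A; split => //.
- set X := [set c | prec l c j]; set Y := [set c | prec l c i].
  have sub : j |: (X :\: Y) \subset A.
    apply/subsetP => c; rewrite !inE => /orP [/eqP ->|/andP [hY hX]].
      by rewrite eqxx pij orbT.
    rewrite hX orbT andbT; case: (eqVneq c i) => //= ci.
    by have := prec_total l ci; rewrite (negPf hY) /=.  
  have hjX : j \notin X :\: Y by rewrite !inE (negPf (prec_irr l j)) andbF.
  apply: leq_trans (subset_leq_card sub); rewrite cardsU1 hjX cardsD.
  have : (#|X :&: Y| <= #|Y|)%N by apply: subset_leq_card; exact: subsetIr.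
  have -> : #|X| = rank_of l j by rewrite rank_set.
  have -> : #|Y| = rank_of l i by rewrite rank_set.
  rewrite hrk /=; lia.
- move=> a; rewrite !inE /prec => /andP [h1 h2].
  move: pij; rewrite /prec => pij.
  case/orP: h1 => [/eqP ->|h1]; case/orP: h2 => [/eqP e|h2].
  + subst a. apply/andP; split; move: pij => /orP [h|/andP [/eqP e _]]; lia.
  + by apply/andP; split; [case/orP: h2 => [h|/andP [/eqP e _]] | ]; lia.
  + by subst a; apply/andP; split; [| case/orP: h1 => [h|/andP [/eqP e' _]]]; lia.
  + by apply/andP; split; [case/orP: h2 => [h|/andP [/eqP e _]] | case/orP: h1 => [h|/andP [/eqP e _]]]; lia.
- move=> a; rewrite !inE /prec => /andP [h1 _] e.
  case/orP: h1 => [/eqP -> //|/orP [h|/andP [_ h]]]; [lia | exact: ltnW].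
- move=> a; rewrite !inE /prec => /andP [_ h2] e.
  case/orP: h2 => [/eqP -> //|/orP [h|/andP [_ h]]]; [lia | exact: ltnW].
Qed.

Definition toW n M (f : {ffun 'I_n -> 'I_(2 * M).+1}) : weight n :=
  [ffun i => (f i : nat)%:Z - M%:Z].

Lemma toW_box n M f : inPM M (@toW n M f).
Proof. by apply/forallP => i; rewrite ffunE; have := ltn_ord (f i); lia. Qed.

Lemma toW_inj n M : injective (@toW n M).
Proof.
move=> f g e; apply/ffunP => i; apply: val_inj.
by have := congr1 (fun h : weight n => h i) e; rewrite /toW !ffunE /=; lia.
Qed.

Lemma toW_surj n M (nu : weight n) : inPM M nu -> exists f, @toW n M f = nu.
Proof.
move=> /forallP hnu; exists [ffun i => inord (absz (nu i + M%:Z))].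
apply/ffunP => i; have := hnu i => hi.
have h0 : 0 <= nu i + M%:Z by lia.
have ha := gez0_abs h0.
rewrite /toW !ffunE inordK; first by rewrite ha addrK.
rewrite -ltz_nat ha; move: hi; set x := nu i; set y := nu i; lia.
Qed.

Lemma box_sum (R : realType) n M (P : pred (weight n)) (nu : weight n) :
  \sum_(f | P (@toW n M f)) @basis_vec R n (toW f) nu = (inPM M nu && P nu)%:R.
Proof.
rewrite /basis_vec; case hnu: (inPM M nu) => /=; last first.
  apply: big1 => f _; case: eqP => // e; by move: hnu; rewrite e toW_box.
have [f0 hf0] := toW_surj hnu.
case hP: (P nu).
  rewrite (bigD1 f0) /=; last by rewrite hf0.
  rewrite hf0 eqxx big1 ?addr0 // => f /andP [_ hf]; case: eqP => // e.
  by move: hf; rewrite -hf0 in e; rewrite (toW_inj e) eqxx.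
apply: big1 => f hf; case: eqP => // e; by move: hf; rewrite -e hP.
Qed.

Lemma m1_ge0 n M (mu : weight n) : inPM M mu -> 0 <= m1 M mu.
Proof. move=> /forallP h; apply: sumr_ge0 => m _; have := h m; nia. Qed.

Lemma m2_ge0 n M (mu : weight n) : inPM M mu -> 0 <= m2 M mu.
Proof. move=> /forallP h; apply: sumr_ge0 => m _; have := h m; nia. Qed.

Lemma main_span (R : realType) n k r M : (1 <= k)%N -> (2 <= r)%N ->
  forall lam : weight n, inPM M lam -> spanP R n k r M (@basis_vec R n lam).
Proof.
move=> hk hr.
suff H : forall a b (lam : weight n), inPM M lam -> `|m1 M lam|%N = a -> `|m2 M lam|%N = b ->
    spanP R n k r M (@basis_vec R n lam).
  by move=> lam hl; exact: H erefl erefl.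
elim/ltn_ind => a IHa; elim/ltn_ind => b IHb lam hl ea eb.
case: (classic (inS k r lam)) => hS; last first.
  apply: spExt _ _ (spB 1 lam _ hl hS sp0) _ => nu; by rewrite mul1r addr0.
have [i [j [A [hA HA1 HA2 HA3 Hnb]]]] := @inS_A n k r lam hk hS.
have HJ := @Jrel R n k r M lam A i hr hA hl.
pose P (mu : weight n) := Tcond r M lam A mu && (mu != lam).
have HS : spanP R n k r M (fun nu => \sum_(f | P (@toW n M f)) @basis_vec R n (toW f) nu).
  apply: spSum => f /andP [hT hne].
  have hb := toW_box f.
  have g1 := m1_ge0 hb; have g2 := m2_ge0 hb.
  have l1 := m1_ge0 hl; have l2 := m2_ge0 hl.
  have [h|[h1 h2]] := decrease hr HA1 HA2 HA3 Hnb hT hne.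
    apply: (IHa `|m1 M (toW f)|%N _ _ _ hb erefl erefl); rewrite -ea; lia.
  apply: (IHb `|m2 M (toW f)|%N _ _ hb _ erefl); rewrite -?ea -?eb; lia.
apply: spExt _ _ (spAdd HJ (spScale (-1) HS)) _ => nu.
rewrite (box_sum _ _ P) /P /basis_vec.
have Tlam : Tcond r M lam A lam.
  rewrite /Tcond hl /=; apply/andP; split; [apply/andP; split|].
  - by apply/forallP => m; rewrite eqxx implybT.
  - by apply/forallP => m; rewrite subrr dvdz0 implybT.
  - by [].
case: (eqVneq nu lam) => [->|hne]; first by rewrite Tlam hl /= mulr0 addr0.
rewrite andbT /=.
case hT: (Tcond r M lam A nu); last by rewrite andbF mulr0 addr0.
have -> : inPM M nu by move: hT; rewrite /Tcond => /andP [/andP [/andP [-> _] _] _].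
by rewrite mulN1r subrr.
Qed.


Theorem proposition5p1 (R : realType) (n k r M : nat)
  (hn : (2 <= n)%N) (hk1 : (1 <= k)%N) (hk2 : (k <= n - 1)%N) (hr : (2 <= r)%N)
  (l : weight n) (hlM : inPM M l) (hlS : inS k r l) :
  exists (m1 : nat) (mu : 'I_m1 -> weight n) (c : 'I_m1 -> R[i])
         (m2 : nat) (z : 'I_m2 -> 'I_n -> R[i]) (a : 'I_m2 -> R[i]),
    (forall t, inPM M (mu t) /\ inB k r (mu t)) /\
    (forall t, Jpoint k r (z t)) /\
    (forall nu : weight n,
       @basis_vec R n l nu =
       \sum_(t < m1) c t * @basis_vec R n (mu t) nu + \sum_(t < m2) a t * ev M (z t) nu).
Proof.
exact: spExtract (@main_span R n k r M hk1 hr l hlM).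
Qed.
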